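(* Let $K\subset\mathbb R^{d_1}$ be compact and $f:K\to\mathbb R^{d_3}$ continuous. For every $\epsilon>0$ there exist $d_2>0$, $W_1\in\mathrm{Mat}(d_2,d_1)$, $W_2\in\mathrm{Mat}(d_3,d_2)$ and $b\in\mathbb R^{d_2}$ such that the function $f^U_{W_1,W_2,b}(x)=W_2\cdot\sigma_{\mathbb R^{d_2}}(W_1x+b)$ satisfies $\|f^U_{W_1,W_2,b}-f\|_{L^2(K)}<\epsilon$.
   Context: For $n\ge1$, $\sigma_{\mathbb R^n}:\mathbb R^n\to\mathbb R^n$ is defined by $\sigma_{\mathbb R^n}(x)_i=\dfrac{e^{2x_i}}{1+\sum_{j=1}^ne^{2x_j}}$, $i=1,\dots,n$ (the softmax on $(0,x_1,\dots,x_n)$ with the $0$-th component dropped; its image is the interior of the standard simplex with vertices $0,\epsilon_1,\dots,\epsilon_n$). The $L^2(K)$-norm is with respect to Lebesgue measure and the Euclidean norm on $\mathbb R^{d_3}$. *)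

(* Defs.v *)
From HB Require Import structures.
From mathcomp Require Import all_boot all_order all_algebra.
From mathcomp Require Import all_classical all_reals all_analysis.
Set Implicit Arguments. Unset Strict Implicit. Unset Printing Implicit Defensive.
Import Order.TTheory GRing.Theory Num.Theory.
Import numFieldNormedType.Exports.
Local Open Scope classical_set_scope.
Local Open Scope ring_scope.

(* sigma_{R^n}: softmax on (0, x_1, ..., x_n) with the 0-th component dropped.
   Vectors of R^n are column vectors 'cV[R]_n. *)
Definition sigmaRn {R : realType} {n : nat} (x : 'cV[R]_n) : 'cV[R]_n :=
  \col_i (expR (2 * x i 0) / (1 + \sum_(j < n) expR (2 * x j 0))).

Definition netU {R : realType} {d1 d2 d3 : nat}
  (W1 : 'M[R]_(d2, d1)) (W2 : 'M[R]_(d3, d2)) (b : 'cV[R]_d2)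
  (x : 'cV[R]_d1) : 'cV[R]_d3 :=
  W2 *m sigmaRn (W1 *m x + b).

(* Lebesgue integral on R^n of a function with values in \bar R, realized as
   the iterated one-dimensional Lebesgue integral (Tonelli/Fubini:
   the n-dimensional Lebesgue measure is the n-fold product of the
   one-dimensional one; the only integrands used below are non-negative and
   Borel measurable). *)
Fixpoint lebesgue_int_Rn {R : realType} (n : nat) :
    ('cV[R]_n -> \bar R) -> \bar R :=
  match n return ('cV[R]_n -> \bar R) -> \bar R with
  | 0 => fun F => F 0
  | n'.+1 => fun F =>
      (\int[@lebesgue_measure R]_t
         lebesgue_int_Rn (fun v : 'cV[R]_n' => F (col_mx (t%:M : 'cV[R]_1) v)))%E
  end.

Definition sqnorm2 {R : realType} {n : nat} (y : 'cV[R]_n) : R :=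
  \sum_(i < n) (y i 0) ^+ 2.

Definition L2K_dist {R : realType} {d1 d3 : nat} (K : set 'cV[R]_d1)
  (g f : 'cV[R]_d1 -> 'cV[R]_d3) : \bar R :=
  poweR (lebesgue_int_Rn (fun x => ((\1_K x : R) * sqnorm2 (g x - f x))%:E))
        (2^-1).

(* Main.v *)
Require Import Defs.
From HB Require Import structures.
From mathcomp Require Import all_boot all_order all_algebra.
From mathcomp Require Import all_classical all_reals all_analysis.
From mathcomp Require Import measurable_realfun finmap.
From mathcomp Require Import ring lra.
Set Implicit Arguments. Unset Strict Implicit.
Import Order.TTheory GRing.Theory Num.Theory.
Import numFieldNormedType.Exports.
Local Open Scope classical_set_scope.
Local Open Scope ring_scope.
Lemma entry_le_norm (R : realType) m n (x : 'M[R]_(m, n)) i j : `|x i j| <= `|x|.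
Proof.
rewrite (_ : `|x| = mx_norm x) // mx_normrE.
exact: (le_bigmax 0 (fun ij : 'I_m * 'I_n => `|x ij.1 ij.2|) (i, j)).
Qed.

Lemma compact_entries (R : realType) m n (K : set 'M[R]_(m, n)) : compact K ->
  exists B, 0 < B /\ forall x, K x -> forall i j, `|x i j| <= B.
Proof.
move=> /compact_bounded [M [_ HM]].
exists (`|M| + 1); split; first by rewrite ltr_wpDl.
move=> x Kx i j; apply: (le_trans (entry_le_norm x i j)).
apply: (HM (`|M| + 1)) => //.
by rewrite (le_lt_trans (ler_norm M)) // ltrDl.
Qed.
Lemma int_mono d (T : measurableType d) (R : realType) (mu : {measure set T -> \bar R})
  (f g : T -> \bar R) : (forall x, 0 <= f x)%E -> (forall x, f x <= g x)%E ->
  (\int[mu]_x f x <= \int[mu]_x g x)%E.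
Proof.
move=> f0 fg.
have g0 : forall x, (0 <= g x)%E by move=> x; exact: le_trans (f0 x) (fg x).
rewrite (@ge0_integralE _ _ _ mu setT f) // (@ge0_integralE _ _ _ mu setT g) //.
rewrite !patch_setT.
apply: ereal_sup_le => _ [h /= hf <-]; exists h => //= x.
exact: le_trans (hf x) (fg x).
Qed.

Lemma int_Rn_bound (R : realType) (B : R) (hB : 0 < B) (n : nat) :
  forall (F : 'cV[R]_n -> \bar R) (c : R), 0 <= c ->
  (forall x, (0 <= F x)%E) -> (forall x, (F x <= c%:E)%E) ->
  (forall x : 'cV[R]_n, (exists i, B < `|x i 0|) -> F x = 0%E) ->
  (0 <= lebesgue_int_Rn F /\ lebesgue_int_Rn F <= (c * (B *+ 2) ^+ n)%:E)%E.
Proof.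
elim: n => [|n IH] F c c0 F0 Fc Fout /=.
  by rewrite expr0 mulr1; split.
set G := fun t => lebesgue_int_Rn (fun v : 'cV[R]_n => F (col_mx (t%:M : 'cV[R]_1) v)).
have HG : forall t, (0 <= G t /\ G t <= ((c * (B *+ 2) ^+ n) * (\1_(`[-B, B]%classic) t : R))%:E)%E.
  move=> t; rewrite /G.
  have [tin|tout] := boolP (t \in `[-B, B]).
    rewrite indicE mem_set // mulr1.
    apply: IH => // x [i Hi].
    apply: Fout; exists (rshift 1 i). by rewrite (col_mxEd (t%:M : 'cV[R]_1) x i 0).
  rewrite indicE (_ : (t \in _) = false) ?mulr0; last first.
    apply/negbTE. by rewrite mem_setE.
  rewrite -(mul0r ((B *+ 2) ^+ n)).
  apply: (IH _ 0) => //; [move=> x|move=> x _].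
    rewrite Fout //; exists (lshift n (ord0 : 'I_1)); rewrite (col_mxEu (t%:M : 'cV[R]_1) x ord0 0) mxE /=.
    by move: tout; rewrite in_itv /= -ler_norml -ltNge.
  rewrite Fout //; exists (lshift n (ord0 : 'I_1)); rewrite (col_mxEu (t%:M : 'cV[R]_1) x ord0 0) mxE /=.
  by move: tout; rewrite in_itv /= -ler_norml -ltNge.
split.
  by apply: integral_ge0 => t _; case: (HG t).
apply: le_trans.
  apply: (@int_mono _ _ _ (@lebesgue_measure R) G (fun t => ((c * (B *+ 2) ^+ n) * (\1_(`[-B, B]%classic) t : R))%:E)).
    by move=> t; case: (HG t).
  by move=> t; case: (HG t).
under eq_integral do rewrite EFinM.
rewrite ge0_integralZl_EFin //; last first.
  by rewrite mulr_ge0 // exprn_ge0 // mulrn_wge0 // ltW.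
  by apply/measurable_EFinP; exact: measurable_indic.
rewrite integral_indic // setIT.
have HB2 : lebesgue_measure (`[-B, B]%classic : set R) = ((B *+ 2)%:E : \bar R).
  rewrite lebesgue_measure_itv /= lte_fin gtrN // -EFinD opprK -mulr2n //.
rewrite [X in (_ * X <= _)%E]HB2.
by rewrite -EFinM lee_fin exprSr mulrA.
Qed.

Lemma sqnorm2_ge0 (R : realType) n (y : 'cV[R]_n) : 0 <= sqnorm2 y.
Proof. by apply: sumr_ge0 => i _; exact: sqr_ge0. Qed.

Lemma assemble (R : realType) d1 d3 (K : set 'cV[R]_d1) (g f : 'cV[R]_d1 -> 'cV[R]_d3)
  (B c eps : R) : 0 < B -> (forall x, K x -> forall i j, `|x i j| <= B) -> 0 <= c ->
  (forall x, K x -> sqnorm2 (g x - f x) <= c) -> c * (B *+ 2) ^+ d1 < eps ^+ 2 -> 0 < eps ->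
  (L2K_dist K g f < eps%:E)%E.
Proof.
move=> B0 KB c0 Hc HV e0.
set F := (fun x => ((\1_K x : R) * sqnorm2 (g x - f x))%:E).
have [|||I0 IV] := int_Rn_bound B0 (n := d1) (F := F) c0.
- by move=> x; rewrite /F lee_fin mulr_ge0 // sqnorm2_ge0.
- move=> x; rewrite /F lee_fin indicE; case: (boolP (x \in K)) => xK.
    by rewrite mul1r; apply: Hc; rewrite -in_setE.
  by rewrite mul0r.
- move=> x [i Hi]; rewrite /F indicE; case: (boolP (x \in K)) => xK; last by rewrite mul0r.
  by move: Hi; rewrite ltNge (KB x _ i 0) //; rewrite -in_setE.
rewrite /L2K_dist -/F.
move: I0 IV; case: (lebesgue_int_Rn F) => [r| |] //= r0 rV.
rewrite lte_fin powR12_sqrt // -[X in _ < X](gtr0_norm e0) -sqrtr_sqr ltr_sqrt ?exprn_gt0 //.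

by apply: le_lt_trans HV.
Qed.
Lemma min_pos (T : eqType) (R : realType) (s : seq T) (g : T -> R) :
  (forall p, p \in s -> 0 < g p) -> exists2 d, 0 < d & forall p, p \in s -> d <= g p.
Proof.
elim: s => [|a s IH] H; first by exists 1.
have [|d d0 Hd] := IH; first by move=> p ps; apply: H; rewrite in_cons ps orbT.
exists (Num.min d (g a)).
  by rewrite lt_min d0 H // mem_head.
move=> p; rewrite in_cons => /orP[/eqP->|ps]; first by rewrite ge_min lexx orbT.
by rewrite ge_min Hd.
Qed.

Lemma unif_cont (R : realType) m n (K : set 'cV[R]_m) (f : 'cV[R]_m -> 'cV[R]_n) :
  compact K -> {within K, continuous f} -> forall e, 0 < e ->
  exists2 d, 0 < d & forall x y, K x -> K y -> ball x d y -> ball (f x) e (f y).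
Proof.
move=> cK cf e e0.
have loc : forall p, exists d : R, 0 < d /\ (K p -> forall y, K y -> ball p (d *+ 2) y -> ball (f p) (e / 2) (f y)).
  move=> p; have [Kp|nKp] := pselect (K p); last by exists 1; split.
  have := (subspace_continuousP K f).1 cf p Kp.
  move=> /(_ (ball (f p) (e / 2))) H.
  have {H} := H (nbhsx_ballx _ _ _); rewrite divr_gt0 // => /(_ isT).
  rewrite /= /within => /nbhs_ballP [d /= d0 Hd].
  exists (d / 2); split; first by rewrite divr_gt0.
  move=> _ y Ky Bpy; apply: (Hd y) => //.
  by move: Bpy; rewrite mulr2n -splitr.
have [del Hdel] := choice loc.
move: cK; rewrite compact_cover => cK.
have [D' D'K cov] := cK _ K (fun p => ball p (del p)) (fun p _ => ball_open p (del p)) (fun x Kx => @ex_intro2 _ K (fun i => ball i (del i) x) x Kx (ballxx _ (proj1 (Hdel x)))).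

have [d d0 Hd] := @min_pos _ R (enum_fset D') del (fun p _ => proj1 (Hdel p)).
exists d => // x y Kx Ky Bxy.
have [p /= pD Bpx] := cov x Kx.
have Kp : K p by have := D'K p pD; rewrite in_setE.
have [dp0 Hp] := Hdel p.
apply: (@ball_splitr _ _ (f p)).
  apply: (Hp Kp x Kx); apply: (le_ball (e1 := del p)) => //.
  by rewrite mulr2n lerDl ltW.
apply: (Hp Kp y Ky); apply: (le_ball (e1 := del p + d)).
  by rewrite mulr2n lerD2l Hd.
exact: ball_triangle Bpx Bxy.
Qed.
Lemma finite_net (R : realType) m (K : set 'cV[R]_m) : compact K -> (exists x, K x) ->
  forall r, 0 < r -> exists N, (0 < N)%N /\ exists p : 'I_N -> 'cV[R]_m,
  (forall i, K (p i)) /\ forall x, K x -> exists i, ball (p i) r x.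
Proof.
rewrite compact_cover => cK [x0 Kx0] r r0.
have [D' D'K cov] := cK _ K (fun p => ball p r) (fun p _ => ball_open p r)
  (fun x Kx => @ex_intro2 _ K (fun i => ball i r x) x Kx (ballxx _ r0)).
set s := enum_fset D'.
have [p0 /= p0D _] := cov x0 Kx0.
exists (size s); split.
  have p0s : p0 \in s by [].
  by move: p0s; case: (s).
exists (fun i => nth 0 s i); split.
  move=> i; have := D'K (nth 0 s i); rewrite in_setE; apply.
  exact: mem_nth.
move=> x Kx; have [p /= pD Bpx] := cov x Kx.
have ps : p \in s by [].
have ip : (index p s < size s)%N by rewrite index_mem.
by exists (Ordinal ip) => /=; rewrite nth_index.
Qed.
Lemma key_bound (R : realType) N (E a : 'I_N -> R) (v eta Mf T tau : R) (i0 : 'I_N) :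
  (forall i, 0 <= E i) -> 0 <= eta -> 0 <= tau -> `|v| <= Mf -> (forall i, `|a i| <= Mf) ->
  0 < T -> T <= E i0 ->
  (forall i, `|v - a i| < eta \/ E i <= tau * E i0) ->
  `|v - \sum_i a i * (E i / (1 + \sum_j E j))| <= Mf / T + eta + N%:R * (Mf *+ 2 * tau).
Proof.
move=> E0 eta0 tau0 vM aM T0 TE Hi.
set S := \sum_j E j.
have S0 : 0 <= S by apply: sumr_ge0.
have ES : E i0 <= S by rewrite /S (bigD1 i0) //= lerDl sumr_ge0.
have D0 : 0 < 1 + S by rewrite ltr_pwDl.
have -> : v - \sum_i a i * (E i / (1 + S)) = v / (1 + S) + \sum_i (v - a i) * (E i / (1 + S)).
  have -> : \sum_i (v - a i) * (E i / (1 + S)) = v * (S / (1 + S)) - \sum_i a i * (E i / (1 + S)).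
    rewrite (eq_bigr (fun i => v * (E i / (1 + S)) - a i * (E i / (1 + S)))); last by move=> i _; rewrite mulrBl.
    by rewrite sumrB -mulr_sumr -mulr_suml.
  have : 1 + S != 0 by rewrite gt_eqF.
  move=> nz; field => //.
rewrite -addrA; apply: (le_trans (ler_normD _ _)); apply: lerD.
  have Mf0 : 0 <= Mf by apply: le_trans vM; exact: normr_ge0.
  rewrite normrM normfV (gtr0_norm D0).
  apply: (@le_trans _ _ (Mf / (1 + S))).
    by rewrite ler_pM2r ?invr_gt0.
  apply: ler_wpM2l => //; rewrite lef_pV2 ?posrE //.
  by apply: le_trans TE _; apply: le_trans ES _; rewrite lerDr.
have Mf0 : 0 <= Mf by apply: le_trans vM; exact: normr_ge0.
apply: le_trans (ler_norm_sum _ _ _) _.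
apply: (@le_trans _ _ (\sum_(i < N) (eta * (E i / (1 + S)) + Mf *+ 2 * tau))).
  apply: ler_sum => i _.
  have w0 : 0 <= E i / (1 + S) by rewrite divr_ge0 // ltW.
  rewrite normrM (ger0_norm w0).
  have vaM : `|v - a i| <= Mf *+ 2.
    by apply: le_trans (ler_normB _ _) _; rewrite mulr2n lerD.
  case: (Hi i) => [lt|le].
    rewrite -[X in X <= _]addr0; apply: lerD; first by rewrite ler_wpM2r // ltW.
    by rewrite mulr_ge0 // mulrn_wge0.
  rewrite -[X in X <= _]add0r; apply: lerD; first by rewrite mulr_ge0.
  apply: le_trans (ler_wpM2r w0 vaM) _.
  apply: ler_wpM2l; first by rewrite mulrn_wge0.
  rewrite ler_pdivrMr //; apply: le_trans le _.
  by rewrite ler_wpM2l // (le_trans ES) // lerDr.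
rewrite big_split /= -mulr_sumr -mulr_suml -/S sumr_const card_ord.
apply: lerD; last by rewrite mulr_natl.
rewrite -[X in _ <= X]mulr1; apply: ler_wpM2l => //.
by rewrite ler_pdivrMr // mul1r lerDr.
Qed.
Lemma ball_entries (R : realType) m n (x y : 'M[R]_(m, n)) e :
  ball x e y -> forall i j, `|x i j - y i j| < e.
Proof. by case=> _ H i j; have := H i j; rewrite /ball /=. Qed.

Lemma entries_ball (R : realType) m n (x y : 'M[R]_(m, n)) e : 0 < e ->
  (forall i j, `|x i j - y i j| < e) -> ball x e y.
Proof. by move=> e0 H; split => // i j; rewrite /ball /=. Qed.

Lemma sqnorm2_sub (R : realType) n (x p : 'cV[R]_n) :
  sqnorm2 (x - p) = sqnorm2 x - 2 * \sum_j p j 0 * x j 0 + sqnorm2 p.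
Proof.
rewrite /sqnorm2 mulr_sumr -sumrB -big_split /=; apply: eq_bigr => j _.
rewrite !mxE; ring.
Qed.

Lemma entry_sq_le (R : realType) n (x : 'cV[R]_n) j : (x j 0) ^+ 2 <= sqnorm2 x.
Proof.
rewrite /sqnorm2 (bigD1 j) //= lerDl; apply: sumr_ge0 => i _; exact: sqr_ge0.
Qed.

Lemma coord_sq (R : realType) n (y : 'cV[R]_n) e :
  (forall k, `|y k 0| <= e) -> sqnorm2 y <= n%:R * e ^+ 2.
Proof.
move=> H; rewrite /sqnorm2 mulr_natl -[in X in _ <= X](card_ord n) -sumr_const.
apply: ler_sum => k _; rewrite -real_normK ?num_real //.
by rewrite lerXn2r ?nnegrE ?normr_ge0 // (le_trans (normr_ge0 _) (H k)).
Qed.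

Lemma ball_sq (R : realType) n (p x : 'cV[R]_n) r :
  ball p r x -> sqnorm2 (x - p) <= n%:R * r ^+ 2.
Proof.
move=> /ball_entries H; apply: coord_sq => k; rewrite !mxE distrC; apply: ltW.
exact: H.
Qed.

Lemma sq_ball (R : realType) n (p x : 'cV[R]_n) d : 0 < d ->
  sqnorm2 (x - p) < d ^+ 2 -> ball p d x.
Proof.
move=> d0 H; apply: entries_ball => // i j.
rewrite (ord1 j) distrC.
have := le_lt_trans (entry_sq_le (x - p) i) H.
rewrite !mxE -real_normK ?num_real // => h.
by rewrite -(@ltr_pXn2r _ 2 isT `|x i 0 - p i 0| d) ?nnegrE ?normr_ge0 ?(ltW d0).
Qed.

Definition W1of (R : realType) d1 N (lam : R) (p : 'I_N -> 'cV[R]_d1) : 'M[R]_(N, d1) :=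
  \matrix_(i, j) (lam * p i j 0).
Definition bof (R : realType) d1 N (lam L : R) (p : 'I_N -> 'cV[R]_d1) : 'cV[R]_N :=
  \col_i (L - lam * sqnorm2 (p i) / 2).

Lemma net_eval (R : realType) d1 N (lam L : R) (p : 'I_N -> 'cV[R]_d1) x i :
  expR (2 * (W1of lam p *m x + bof lam L p) i 0) =
  expR (lam * sqnorm2 x + 2 * L) * expR (- (lam * sqnorm2 (x - p i))).
Proof.
rewrite -expRD; congr expR.
rewrite sqnorm2_sub !mxE.
under eq_bigr do rewrite mxE.
under eq_bigr do rewrite -mulrA.
by rewrite -mulr_sumr; field.
Qed.

Lemma netU_entry (R : realType) d1 d2 d3 (W1 : 'M[R]_(d2, d1)) (W2 : 'M[R]_(d3, d2)) b x k :
  netU W1 W2 b x k 0 = \sum_i W2 k i * (expR (2 * (W1 *m x + b) i 0) /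
     (1 + \sum_j expR (2 * (W1 *m x + b) j 0))).
Proof. by rewrite /netU /sigmaRn mxE; apply: eq_bigr => i _; rewrite mxE. Qed.
Lemma approx (R : realType) d1 d3 (K : set 'cV[R]_d1) (f : 'cV[R]_d1 -> 'cV[R]_d3) :
  compact K -> {within K, continuous f} -> forall c, 0 < c ->
  exists d2 : nat, (0 < d2)%N /\ exists (W1 : 'M[R]_(d2, d1)) (W2 : 'M[R]_(d3, d2)) (b : 'cV[R]_d2),
    forall x, K x -> sqnorm2 (netU W1 W2 b x - f x) <= c.
Proof.
move=> cK cf c c0.
have [[x0 Kx0]|Ke] := pselect (exists x, K x); last first.
  by exists 1%N; split => //; exists 0, 0, 0 => x Kx; exfalso; apply: Ke; exists x.
pose e0 := Num.min 1 (c / (d3.+1)%:R).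
have e0p : 0 < e0 by rewrite lt_min ltr01 divr_gt0.
suff [N [N0 [W1 [W2 [b Hb]]]]] : exists N, (0 < N)%N /\
    exists (W1 : 'M[R]_(N, d1)) (W2 : 'M[R]_(d3, N)) (b : 'cV[R]_N),
    forall x, K x -> forall k, `|netU W1 W2 b x k 0 - f x k 0| <= e0.
  exists N; split => //; exists W1, W2, b => x Kx.
  apply: le_trans (@coord_sq _ _ _ e0 _) _.
    have EE : forall (A B : 'cV[R]_d3) k, (A - B) k 0 = A k 0 - B k 0 by move=> *; rewrite !mxE.
    by move=> k; rewrite EE; exact: Hb.
  have h1 : e0 <= 1 by rewrite ge_min lexx.
  have h2 : e0 * (d3.+1)%:R <= c.
    by rewrite -ler_pdivlMr ?ltr0Sn // ge_min lexx orbT.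
  have h3 : (d3.+1)%:R = d3%:R + 1 :> R by rewrite -natr1.
  have h4 : 0 <= d3%:R :> R by [].
  rewrite h3 in h2; nra.
have [Mf [Mf0 HMf]] := compact_entries (continuous_compact cf cK).
have fM : forall x, K x -> forall k, `|f x k 0| <= Mf.
  by move=> x Kx k; apply: HMf; exists x.
pose eta := e0 / 3.
have eta0 : 0 < eta by rewrite divr_gt0.
have [dl dl0 Hdl] := unif_cont cK cf eta0.
pose n1 : R := d1%:R.
have n10 : 0 <= n1 by [].
pose r := dl / (n1 + 1).
have r0 : 0 < r by rewrite divr_gt0 // ltr_wpDl.
have dlr : dl = r * (n1 + 1) by rewrite /r divfK // gt_eqF // ltr_wpDl.
pose rho := n1 * r ^+ 2.
have rho0 : 0 <= rho by rewrite mulr_ge0 // sqr_ge0.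
have rho_lt : rho < dl ^+ 2 by rewrite /rho dlr; nra.
have [N [N0 [p [pK pcov]]]] := finite_net cK (ex_intro _ x0 Kx0) r0.
pose g := dl ^+ 2 - rho.
have g0 : 0 < g by rewrite subr_gt0.
pose X := N%:R * (Mf *+ 2) / eta.
have X0 : 0 <= X by rewrite divr_ge0 // ?mulr_ge0 // ?mulrn_wge0 // ltW.
pose lam := X / g.
have lam0 : 0 <= lam by rewrite divr_ge0 // ltW.
have lamg : lam * g = X by rewrite /lam divfK // gt_eqF.
pose L := (lam * rho + Mf / eta) / 2.
pose T := expR (2 * L - lam * rho).
have TE : 2 * L - lam * rho = Mf / eta.
  by rewrite /L; field; rewrite gt_eqF.
pose tau := expR (- (lam * g)).
have bnd1 : Mf / T <= eta.
  rewrite ler_pdivrMr ?expR_gt0 // /T TE.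
  apply: le_trans (_ : eta * (1 + Mf / eta) <= _); last first.
    by rewrite ler_wpM2l ?expR_ge1Dx // ltW.
  by rewrite mulrDr mulr1 mulrC divfK ?gt_eqF // lerDr ltW.
have bnd2 : N%:R * (Mf *+ 2 * tau) <= eta.
  have -> : N%:R * (Mf *+ 2 * tau) = eta * (X * tau).
    by rewrite /X mulrA; field; rewrite gt_eqF.
  rewrite -[X in _ <= X]mulr1 ler_wpM2l ?(ltW eta0) //.
  rewrite /tau lamg expRN ler_pdivrMr ?expR_gt0 // mul1r.
  by apply: le_trans (expR_ge1Dx X); rewrite lerDr.
exists N; split => //.
exists (W1of lam p), (\matrix_(k, i) f (p i) k 0), (bof lam L p) => x Kx k.
rewrite netU_entry distrC.
under eq_bigr do rewrite mxE.
have [i0 Bi0] := pcov x Kx.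
have Di0 : sqnorm2 (x - p i0) <= rho by apply: ball_sq.
pose A := lam * sqnorm2 x + 2 * L.
have EE : forall i, expR (2 * (W1of lam p *m x + bof lam L p) i 0) =
    expR (A - lam * sqnorm2 (x - p i)) by move=> i; rewrite net_eval -expRD.
apply: le_trans (@key_bound R N (fun i => expR (2 * (W1of lam p *m x + bof lam L p) i 0))
   (fun i => f (p i) k 0) (f x k 0) eta Mf T tau i0 _ _ _ _ _ _ _ _) _.
- by move=> i; exact: expR_ge0.
- exact: ltW.
- exact: expR_ge0.
- exact: fM.
- by move=> i; apply: fM.
- exact: expR_gt0.
- rewrite EE /T ler_expR /A lerB //.
    by rewrite lerDr mulr_ge0 // sqnorm2_ge0.
  by rewrite ler_wpM2l.
- move=> i; have [lt|ge] := ltP (sqnorm2 (x - p i)) (dl ^+ 2).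
    left; have := Hdl (p i) x (pK i) Kx (sq_ball dl0 lt).
    by move=> /ball_entries /(_ k 0); rewrite distrC.
  right; rewrite !EE /tau -expRD ler_expR.
  have h : lam * (g + sqnorm2 (x - p i0)) <= lam * sqnorm2 (x - p i).
    by apply: ler_wpM2l => //; rewrite /g; lra.
  rewrite mulrDr in h; lra.
have e3 : e0 = eta * 3 by rewrite /eta divfK.
rewrite e3; lra.
Qed.

Theorem theorem5 (R : realType) (d1 d3 : nat) (K : set 'cV[R]_d1)
  (f : 'cV[R]_d1 -> 'cV[R]_d3) :
  compact K -> {within K, continuous f} ->
  forall eps : R, 0 < eps ->
  exists d2 : nat, (0 < d2)%N /\
  exists (W1 : 'M[R]_(d2, d1)) (W2 : 'M[R]_(d3, d2)) (b : 'cV[R]_d2),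
    (L2K_dist K (netU W1 W2 b) f < eps%:E)%E.
Proof.
move=> cK cf eps e0.
have [B [B0 HB]] := compact_entries cK.
pose V := (B *+ 2) ^+ d1.
have V0 : 0 < V by rewrite exprn_gt0 // mulrn_wgt0.
pose c := eps ^+ 2 / (V * 2).
have c0 : 0 < c by rewrite divr_gt0 ?exprn_gt0 // mulr_gt0.
have [d2 [d20 [W1 [W2 [b Hb]]]]] := approx cK cf c0.
exists d2; split => //; exists W1, W2, b.
apply: (assemble B0 HB (ltW c0) Hb) => //.
rewrite /c -/V.
have h : 0 < eps ^+ 2 by rewrite exprn_gt0.
have -> : eps ^+ 2 / (V * 2) * V = eps ^+ 2 / 2 by field; rewrite gt_eqF.
by rewrite ltr_pdivrMr // ltr_pMr // ltr1n.
Qed.
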